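(* If $n>0$ then $v_1=v_2=1$.
   Context: $k$ is a field of characteristic zero, $\mathcal O_n=k[x]/(x^{n+1})$, elements of $\mathcal O_n$ identified with multiplication operators, $\operatorname{ad}_x(\delta)=x\delta-\delta x$. The order filtration is $\mathcal D^p(\mathcal O_n)=\{\delta\in\operatorname{End}_k(\mathcal O_n):[f_0,[f_1,\dots,[f_p,\delta]\dots]]=0\ \forall f_i\in\mathcal O_n\}$. For $\delta\in\mathcal D^p(\mathcal O_n)$, $\operatorname{ad}_x^p(\delta)$ is multiplication by an element of $\mathcal O_n$ and $\operatorname{ad}_x^p:\mathcal D^p(\mathcal O_n)\to\mathcal O_n$ is $\mathcal O_n$-linear, so its image is an ideal $(x^{v_p})$ of $\mathcal O_n$; $v_p\in\{0,\dots,n\}$ denotes the corresponding exponent. *)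

(* Defs.v *)
From HB Require Import structures.
From mathcomp Require Import all_boot all_order all_algebra.
Set Implicit Arguments. Unset Strict Implicit. Unset Printing Implicit Defensive.
Import GRing.Theory.
Local Open Scope ring_scope.

(* O_n = k[x]/(x^(n+1)) is identified with column vectors 'cV[k]_(n.+1) of
   coefficients in the basis 1, x, ..., x^n.  End_k(O_n) is identified with
   'M[k]_(n.+1), acting by  u |-> A *m u, so that composition of operators is
   the matrix product (ring multiplication in 'M[k]_(n.+1)). *)

Definition mulx (k : fieldType) (n : nat) : 'M[k]_n.+1 :=
  \matrix_(i, j) ((i == j.+1 :> nat)%:R).

Definition mulop (k : fieldType) (n : nat) (f : 'cV[k]_n.+1) : 'M[k]_n.+1 :=
  \sum_(i < n.+1) f i 0 *: (mulx k n) ^+ i.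

Definition comm (k : fieldType) (n : nat) (a b : 'M[k]_n.+1) : 'M[k]_n.+1 :=
  a * b - b * a.

Definition iter_comm (k : fieldType) (n : nat) (fs : seq 'cV[k]_n.+1)
  (d : 'M[k]_n.+1) : 'M[k]_n.+1 :=
  foldr (fun f e => comm (mulop f) e) d fs.

Definition in_Dp (k : fieldType) (n p : nat) (d : 'M[k]_n.+1) : Prop :=
  forall fs : seq 'cV[k]_n.+1, size fs = p.+1 -> iter_comm fs d = 0.

Definition adx (k : fieldType) (n : nat) (d : 'M[k]_n.+1) : 'M[k]_n.+1 :=
  comm (mulx k n) d.
Definition adx_pow (k : fieldType) (n p : nat) (d : 'M[k]_n.+1) : 'M[k]_n.+1 :=
  iter p (@adx k n) d.

(* "v_p = m": m in {0..n} and the image ad_x^p(D^p(O_n)) (a set of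
   multiplication operators) is exactly the ideal (x^m) of O_n *)
Definition is_v (k : fieldType) (n p m : nat) : Prop :=
  (m <= n)%N /\
  forall g : 'M[k]_n.+1,
    (exists d, in_Dp p d /\ adx_pow p d = g) <->
    (exists h : 'cV[k]_n.+1, g = mulop h * (mulx k n) ^+ m).

(* Main.v *)
Require Import Defs.
From HB Require Import structures.
From mathcomp Require Import all_boot all_order all_algebra zify ring.
Set Implicit Arguments. Unset Strict Implicit. Unset Printing Implicit Defensive.
Import GRing.Theory.
Local Open Scope ring_scope.

Lemma zid (V : zmodType) (x1 x2 x3 x4 x5 x6 : V) :
  x1 - x2 - (x3 - x4) = (x1 - x5 - (x6 - x4)) + (x5 - x3 - (x2 - x6)).
Proof.
rewrite !opprB !addrA.
rewrite (addrAC (x1 - x5 + x4) (- x6) x5) (addrAC (x1 - x5) x4 x5) subrK.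
rewrite (addrAC (x1 + x4 - x6) (- x3) x6) subrK.
by rewrite (addrAC x1 (- x2) x4) (addrAC (x1 + x4) (- x2)).
Qed.

Lemma jacobi (k : fieldType) (n : nat) (a b c : 'M[k]_n.+1) :
  comm a (comm b c) = comm (comm a b) c + comm b (comm a c).
Proof.
rewrite /comm !mulrBr !mulrBl !mulrA.
exact: zid.
Qed.

Lemma comm0P (k : fieldType) (n : nat) (a b : 'M[k]_n.+1) :
  comm a b = 0 <-> GRing.comm a b.
Proof.
rewrite /comm /GRing.comm; split => [h|->]; last by rewrite subrr.
by apply/eqP; rewrite -subr_eq0 h.
Qed.

Lemma comm_poly (k : fieldType) (n : nat) (M : 'M[k]_n.+1) (f : 'cV[k]_n.+1) :
  GRing.comm (mulx k n) M -> GRing.comm (mulop f) M.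
Proof.
move=> h; rewrite /GRing.comm /mulop mulr_suml mulr_sumr.
apply: eq_bigr => i _.
have hX : GRing.comm M (mulx k n ^+ i) by apply: commrX.
by rewrite -scalerAl -scalerAr hX.
Qed.

Lemma commX0 (k : fieldType) (n : nat) (M : 'M[k]_n.+1) (f : 'cV[k]_n.+1) :
  comm (mulx k n) M = 0 -> comm (mulop f) M = 0.
Proof. by move=> /comm0P h; apply/comm0P/comm_poly. Qed.

Lemma commX_mulop (k : fieldType) (n : nat) (f : 'cV[k]_n.+1) :
  GRing.comm (mulx k n) (mulop f).
Proof.
rewrite /GRing.comm /mulop mulr_suml mulr_sumr.
apply: eq_bigr => i _.
by rewrite -scalerAl -scalerAr -exprS -exprSr.
Qed.

Lemma comm_mulop (k : fieldType) (n : nat) (f g : 'cV[k]_n.+1) :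
  comm (mulop f) (mulop g) = 0.
Proof. apply/comm0P; apply: comm_poly. exact (commX_mulop g). Qed.

Lemma comm_mulL (k : fieldType) (n : nat) (a b c : 'M[k]_n.+1) :
  comm a b = 0 -> comm a (b * c) = b * comm a c.
Proof.
by move=> /comm0P h; rewrite /comm mulrBr !mulrA h.
Qed.

Lemma iter_commL (k : fieldType) (n : nat) (h : 'cV[k]_n.+1) fs (T : 'M[k]_n.+1) :
  iter_comm fs (mulop h * T) = mulop h * iter_comm fs T.
Proof.
elim: fs => [//|f fs IH] /=.
rewrite /iter_comm /= -/(iter_comm fs _) IH.
by rewrite comm_mulL // comm_mulop.
Qed.

Lemma adx_powL (k : fieldType) (n p : nat) (h : 'cV[k]_n.+1) (T : 'M[k]_n.+1) :
  adx_pow p (mulop h * T) = mulop h * adx_pow p T.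
Proof.
elim: p => [//|p IH] /=.
rewrite /adx_pow /= -/(adx_pow p _) IH /adx comm_mulL //.
by apply/comm0P; exact: commX_mulop.
Qed.

Lemma sum_single (V : zmodType) (N : nat) (F : 'I_N -> V) (l0 : 'I_N) :
  (forall l, l != l0 -> F l = 0) -> \sum_l F l = F l0.
Proof.
move=> h; rewrite (bigD1 l0) //= big1 ?addr0 // => l; exact: h.
Qed.

Lemma mulXl (k : fieldType) (n : nat) (M : 'M[k]_n.+1) i j :
  (mulx k n *m M) i j = if (0 < i)%N then M (inord i.-1) j else 0.
Proof.
rewrite mxE; case: ifP => hi.
  rewrite (sum_single (l0 := inord i.-1)).
    rewrite mxE inordK; last by rewrite (leq_ltn_trans (leq_pred _)).
    by rewrite prednK // eqxx mul1r.
  move=> l hl; rewrite mxE.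
  case: eqP => [e|]; last by rewrite mul0r.
  by case/eqP: hl; apply: val_inj; rewrite /= e inordK /=.
rewrite big1 // => l _; rewrite mxE.
by case: eqP => [e|]; [move: hi; rewrite e | rewrite mul0r].
Qed.

Lemma mulXr (k : fieldType) (n : nat) (M : 'M[k]_n.+1) i j :
  (M *m mulx k n) i j = if (j < n)%N then M i (inord j.+1) else 0.
Proof.
rewrite mxE; case: ifP => hj.
  rewrite (sum_single (l0 := inord j.+1)).
    by rewrite mxE inordK // eqxx mulr1.
  move=> l hl; rewrite mxE.
  case: eqP => [e|]; last by rewrite mulr0.
  by case/eqP: hl; apply: val_inj; rewrite /= e inordK.
rewrite big1 // => l _; rewrite mxE.
case: eqP => [e|]; last by rewrite mulr0.
by move: (ltn_ord l); rewrite e ltnS hj.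
Qed.

Lemma mulX_pow (k : fieldType) (n m : nat) (i j : 'I_n.+1) :
  (mulx k n ^+ m) i j = ((i : nat) == (j + m)%N)%:R.
Proof.
elim: m i j => [|m IH] i j.
  by rewrite expr0 mxE addn0.
rewrite (exprSr (mulx k n)) -mulmxE mulXr; case: ifP => hj.
  by rewrite IH inordK // addSnnS.
case: eqP => // e.
by move: (ltn_ord i) hj; rewrite e; lia.
Qed.

Lemma mulop_entry (k : fieldType) (n : nat) (h : 'cV[k]_n.+1) (i j : 'I_n.+1) :
  mulop h i j = if (j <= i)%N then h (inord (i - j)%N) 0 else 0.
Proof.
rewrite /mulop summxE.
under eq_bigr do rewrite mxE mulX_pow.
case: ifP => hji.
  rewrite (sum_single (l0 := inord (i - j)%N)).
    by rewrite inordK ?subnKC ?eqxx ?mulr1 // ltnS (leq_trans (leq_subr _ _)) // -ltnS.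
  move=> l hl; case: eqP => [e|]; last by rewrite mulr0.
  by case/eqP: hl; apply: val_inj; rewrite /= e addKn inordK.
rewrite big1 // => l _; case: eqP => [e|]; last by rewrite mulr0.
by move: hji; rewrite e leq_addr.
Qed.

Definition S1 (k : fieldType) (n : nat) : 'M[k]_n.+1 :=
  \matrix_(i, j) (if i == j then - ((i : nat)%:R) else 0).

Lemma inord_eq (n : nat) (x : nat) (j : 'I_n.+1) :
  (x < n.+1)%N -> (inord x == j) = (x == j).
Proof. by move=> h; rewrite -val_eqE /= inordK. Qed.

Lemma subE (k : fieldType) (n : nat) (M N : 'M[k]_n.+1) i j :
  (M - N) i j = M i j - N i j.
Proof. by rewrite !mxE. Qed.

Lemma comm_entry (k : fieldType) (n : nat) (A B : 'M[k]_n.+1) i j :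
  (comm A B) i j = (A *m B) i j - (B *m A) i j.
Proof. by rewrite /comm subE !mulmxE. Qed.

Lemma E1 (n : nat) (i j : 'I_n.+1) :
  (0 < i)%N -> (inord i.-1 == j) = ((i : nat) == j.+1).
Proof.
move=> h; rewrite inord_eq; last by have := ltn_ord i; lia.
by apply/eqP/eqP; lia.
Qed.

Lemma E2 (n : nat) (i j : 'I_n.+1) :
  (j < n)%N -> (i == inord j.+1) = ((i : nat) == j.+1).
Proof. by move=> h; rewrite eq_sym inord_eq // eq_sym. Qed.

Lemma commX_S1 (k : fieldType) (n : nat) : comm (mulx k n) (S1 k n) = mulx k n.
Proof.
apply/matrixP => i j; rewrite comm_entry mulXl mulXr !mxE.
have hi := ltn_ord i; have hj := ltn_ord j.
case: (eqVneq (i : nat) j.+1) => [e|ne].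
  have h1 : (0 < i)%N by lia.
  have h2 : (j < n)%N by lia.
  rewrite h1 h2 E1 // E2 // e eqxx inordK; last by lia.
  by rewrite /= opprK mulrS addrCA addNr addr0.
have -> : (if (0 < i)%N then if inord i.-1 == j then - (((@inord n i.-1 : nat))%:R : k) else 0 else 0) = 0.
  by case: ifP => // h1; rewrite E1 // (negPf ne).
have -> : (if (j < n)%N then if i == inord j.+1 then - (((i : nat)%:R) : k) else 0 else 0) = 0.
  by case: ifP => // h1; rewrite E2 // (negPf ne).
by rewrite subrr.
Qed.

Definition cS (k : fieldType) (n j : nat) : k :=
  ((j%:R : k) * (j%:R - 1 - n%:R)) / 2%:R.

Definition S2 (k : fieldType) (n : nat) : 'M[k]_n.+1 :=
  \matrix_(i, j) (if (j : nat) == i.+1 then cS k n j else 0).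

Definition Dg (k : fieldType) (n : nat) : 'M[k]_n.+1 :=
  \matrix_(i, j) (if i == j then n%:R / 2%:R - (i : nat)%:R else 0).

Lemma F1 (n : nat) (i j : 'I_n.+1) :
  (0 < i)%N -> ((j : nat) == (@inord n i.-1).+1) = ((j : nat) == i).
Proof. by move=> h; rewrite inordK ?prednK //; have := ltn_ord i; lia. Qed.

Lemma F2 (n : nat) (i j : 'I_n.+1) :
  (j < n)%N -> ((@inord n j.+1 : nat) == i.+1) = ((j : nat) == i).
Proof. by move=> h; rewrite inordK. Qed.

Lemma cS_diff (k : fieldType) (n m : nat) : (2%:R : k) != 0 ->
  cS k n m - cS k n m.+1 = n%:R / 2%:R - m%:R.
Proof. move=> h; rewrite /cS -addn1 natrD. field. done. Qed.

Lemma cS_n (k : fieldType) (n : nat) : (2%:R : k) != 0 ->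
  cS k n n = n%:R / 2%:R - n%:R.
Proof. move=> h; rewrite /cS. field. done. Qed.

Lemma cS_0 (k : fieldType) (n : nat) : cS k n 0 = 0.
Proof. by rewrite /cS mul0r mul0r. Qed.

Lemma commX_S2 (k : fieldType) (n : nat) : (2%:R : k) != 0 ->
  comm (mulx k n) (S2 k n) = Dg k n.
Proof.
move=> h2.
apply/matrixP => i j; rewrite comm_entry mulXl mulXr !mxE.
have hi := ltn_ord i; have hj := ltn_ord j.
case: (eqVneq i j) => [<-|ne].
  rewrite ?eqxx.
  case: ifP => ip; [rewrite F1 // eqxx|].
    case: ifP => jn; [rewrite F2 // eqxx inordK //|].
      by rewrite cS_diff.
    have -> : (i : nat) = n by lia.
    by rewrite subr0 cS_n.
  have i0 : (i : nat) = 0%N by lia.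
  case: ifP => jn; [rewrite F2 // eqxx inordK //|].
    by rewrite i0 -(cS_0 k n) cS_diff.
  have n0 : n = 0%N by lia.
  by rewrite i0 n0 subrr mul0r subrr.
have ne' : (i : nat) != j by [].
rewrite ?(negPf ne).
case: ifP => ip; [rewrite F1 // eq_sym (negPf ne')|];
  (case: ifP => jn; [rewrite F2 // eq_sym (negPf ne')|]); by rewrite subrr.
Qed.

Lemma commX_Dg (k : fieldType) (n : nat) :
  comm (mulx k n) (Dg k n) = mulx k n.
Proof.
apply/matrixP => i j; rewrite comm_entry mulXl mulXr !mxE.
have hi := ltn_ord i; have hj := ltn_ord j.
case: (eqVneq (i : nat) j.+1) => [e|ne].
  have h1 : (0 < i)%N by lia.
  have h2 : (j < n)%N by lia.
  rewrite h1 h2 E1 // E2 // e eqxx inordK; last by lia.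
  rewrite /= -addn1 natrD; ring.
have -> : (if (0 < i)%N then if inord i.-1 == j then (n%:R / 2%:R - ((@inord n i.-1 : nat))%:R : k) else 0 else 0) = 0.
  by case: ifP => // h1; rewrite E1 // (negPf ne).
have -> : (if (j < n)%N then if i == inord j.+1 then (n%:R / 2%:R - (((i : nat)%:R)) : k) else 0 else 0) = 0.
  by case: ifP => // h1; rewrite E2 // (negPf ne).
by rewrite subrr.
Qed.

Lemma commutant (k : fieldType) (n : nat) (g : 'M[k]_n.+1) :
  comm (mulx k n) g = 0 -> g = mulop (\col_i g i ord0).
Proof.
move=> hc.
have rel : forall i j : 'I_n.+1,
    (if (0 < i)%N then g (inord i.-1) j else 0) =
    (if (j < n)%N then g i (inord j.+1) else 0).
  move=> i j; apply/eqP; rewrite -subr_eq0; apply/eqP.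
  by rewrite -mulXl -mulXr -comm_entry hc mxE.
have key : forall m, (m < n.+1)%N -> forall i : 'I_n.+1,
    g i (inord m) = if (m <= i)%N then g (inord (i - m)) ord0 else 0.
  elim=> [|m IH] hm i.
    rewrite leq0n subn0 inord_val; congr (g _ _); apply: val_inj; by rewrite /= inordK.
  have hmn : (m < n)%N by lia.
  have := rel i (inord m); rewrite inordK; last by lia.
  rewrite hmn => <-.
  case: ifP => ip.
    rewrite IH; last by lia.
    rewrite inordK; last by have := ltn_ord i; lia.
    have -> : (m <= i.-1)%N = (m.+1 <= i)%N by lia.
    case: ifP => // _; congr (g _ _); congr inord; lia.
  by have -> : (m.+1 <= i)%N = false by lia.
apply/matrixP => i j; rewrite mulop_entry.
have := key j (ltn_ord j) i; rewrite inord_val => ->.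
by case: ifP => // _; rewrite mxE.
Qed.

Lemma tr_comm (k : fieldType) (n : nat) (A B : 'M[k]_n.+1) : \tr (comm A B) = 0.
Proof. by rewrite /comm -!mulmxE raddfB /= mxtrace_mulC subrr. Qed.

Lemma tr_mulop (k : fieldType) (n : nat) (h : 'cV[k]_n.+1) :
  \tr (mulop h) = h (inord 0) 0 *+ n.+1.
Proof.
rewrite /mxtrace.
under eq_bigr do rewrite mulop_entry leqnn subnn.
by rewrite sumr_const card_ord.
Qed.

Lemma shift (k : fieldType) (n : nat) (h : 'cV[k]_n.+1) :
  h (inord 0) 0 = 0 ->
  mulop h = mulop (\col_i (if (i < n)%N then h (inord i.+1) 0 else 0)) * mulx k n ^+ 1.
Proof.
move=> h0; apply/matrixP => i j.
rewrite expr1 -mulmxE mulXr mulop_entry.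
have hi := ltn_ord i; have hj := ltn_ord j.
case: (ltngtP j i) => hji.
- have hjn : (j < n)%N by lia.
  rewrite hjn mulop_entry inordK // hji mxE inordK; last by lia.
  have -> : (i - j.+1 < n)%N by lia.
  congr (h _ _); congr inord; lia.
- idtac.
  case: ifP => // hjn; rewrite mulop_entry inordK; last by lia.
  by have -> : (j.+1 <= i)%N = false by lia.
- rewrite hji subnn h0.
  case: ifP => // hjn; rewrite mulop_entry inordK; last by lia.
  by rewrite ltnn.
Qed.

Definition ex1 (k : fieldType) (n : nat) : 'cV[k]_n.+1 :=
  \col_i (((i : nat) == 1%N)%:R).

Lemma mulop_ex1 (k : fieldType) (n : nat) : (0 < n)%N -> mulop (ex1 k n) = mulx k n.
Proof.
move=> hn; rewrite /mulop (sum_single (l0 := inord 1)).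
  by rewrite mxE inordK ?eqxx ?scale1r ?expr1 //; lia.
move=> l hl; rewrite mxE; case: eqP => [e|]; last by rewrite scale0r.
by case/eqP: hl; apply: val_inj; rewrite /= inordK // e.
Qed.

Lemma iter_nseq (k : fieldType) (n : nat) (d : 'M[k]_n.+1) m : (0 < n)%N ->
  iter_comm (nseq m (ex1 k n)) d = adx_pow m d.
Proof.
move=> hn; elim: m => [//|m IH].
by rewrite /iter_comm /= -/(iter_comm _ _) IH mulop_ex1.
Qed.

Lemma fwd (k : fieldType) (hk : [pchar k] =i pred0) (n p : nat) (d : 'M[k]_n.+1) :
  (0 < n)%N -> (0 < p)%N -> in_Dp p d ->
  exists h : 'cV[k]_n.+1, adx_pow p d = mulop h * mulx k n ^+ 1.
Proof.
move=> hn hp H.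
have c : comm (mulx k n) (adx_pow p d) = 0.
  by have := H (nseq p.+1 (ex1 k n)) (size_nseq _ _); rewrite iter_nseq.
have eg := commutant c.
set h := \col_i adx_pow p d i ord0 in eg.
have tr0 : \tr (adx_pow p d) = 0.
  by case: p hp {H c eg h} => // p _; rewrite /adx_pow /= /adx tr_comm.
have h0 : h (inord 0) 0 = 0.
  move: tr0; rewrite eg tr_mulop -mulr_natr => /eqP; rewrite mulf_eq0 => /orP [/eqP //|].
  by have := (pcharf0P k).1 hk n.+1; rewrite /= => ->.
exists (\col_i (if (i < n)%N then h (inord i.+1) 0 else 0)).
by rewrite eg; apply: shift.
Qed.

Lemma cX0 (k : fieldType) (n : nat) (g : 'cV[k]_n.+1) : comm (mulx k n) (mulop g) = 0.
Proof. by apply/comm0P; exact: commX_mulop. Qed.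

Lemma c0X (k : fieldType) (n : nat) (g : 'cV[k]_n.+1) : comm (mulop g) (mulx k n) = 0.
Proof. by apply/comm0P; rewrite /GRing.comm (commX_mulop g). Qed.

Lemma comm0l (k : fieldType) (n : nat) (M : 'M[k]_n.+1) : comm 0 M = 0.
Proof. by rewrite /comm mul0r mulr0 subrr. Qed.

Lemma commNr (k : fieldType) (n : nat) (A B : 'M[k]_n.+1) : comm A B = - comm B A.
Proof. by rewrite /comm opprB. Qed.

Lemma bwd1 (k : fieldType) (n : nat) (h : 'cV[k]_n.+1) :
  exists d, in_Dp 1 d /\ adx_pow 1 d = mulop h * mulx k n ^+ 1.
Proof.
exists (mulop h * S1 k n); split; last first.
  by rewrite adx_powL /adx_pow /= /adx commX_S1 expr1.
move=> [|f [|g [|? ?]]] //= _.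
rewrite comm_mulL ?comm_mulop // comm_mulL ?comm_mulop //.
suff -> : comm (mulop f) (comm (mulop g) (S1 k n)) = 0 by rewrite mulr0.
apply: commX0.
by rewrite jacobi (cX0 g) comm0l add0r commX_S1 (c0X g).
Qed.

Lemma bwd2 (k : fieldType) (n : nat) (h : 'cV[k]_n.+1) : (2%:R : k) != 0 ->
  exists d, in_Dp 2 d /\ adx_pow 2 d = mulop h * mulx k n ^+ 1.
Proof.
move=> h2.
exists (mulop h * S2 k n); split; last first.
  by rewrite adx_powL /adx_pow /= /adx commX_S2 // commX_Dg expr1.
move=> [|f [|g [|e [|? ?]]]] //= _.
rewrite comm_mulL ?comm_mulop // comm_mulL ?comm_mulop // comm_mulL ?comm_mulop //.
suff -> : comm (mulop f) (comm (mulop g) (comm (mulop e) (S2 k n))) = 0 by rewrite mulr0.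
apply: commX0.
rewrite jacobi (cX0 g) comm0l add0r.
rewrite [comm (mulx k n) (comm _ _)]jacobi (cX0 e) comm0l add0r commX_S2 //.
apply: commX0.
by rewrite jacobi (cX0 e) comm0l add0r commX_Dg (c0X e).
Qed.

Theorem lemma6 (k : fieldType) (hk : [pchar k] =i pred0) (n : nat) :
  (0 < n)%N -> is_v k n 1 1 /\ is_v k n 2 1.
Proof.
move=> hn.
have h2 : (2%:R : k) != 0 by rewrite ((pcharf0P k).1 hk 2).
split; split => //; move=> g; split.
- by move=> [d [Hd <-]]; apply: fwd.
- by move=> [h ->]; apply: bwd1.
- by move=> [d [Hd <-]]; apply: fwd.
- by move=> [h ->]; apply: bwd2.
Qed.
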